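(* Let $(X,d)$ be a complete metric space with finite metric dimension, let $\mathcal{D}=\bigcup_j\mathcal{D}^j$, $\mathcal{D}^j=\{Q^j_k\}$, be a dyadic family in $X$ with parameter $\delta\in(0,1)$ and centers $x^j_k$, and let $\mu$ be a Borel measure on $X$ that is positive and finite on $d$-balls. Fix $j$ and set $T_j=\sum_k\mu(Q^j_k)\delta_{x^j_k}$. Fix a constant $C>0$ and a symmetric matrix $(H^j_{ki})$ with positive entries, and let $S_j=\sum_{k,i}w^j_{ki}\delta_{(x^j_k,x^j_i)}$ where $w^j_{ki}=H^j_{ki}(\mu(Q^j_k)+\mu(Q^j_i))$ if $k\neq i$ and $d(x^j_k,x^j_i)<C\delta^j$, and $w^j_{ki}=0$ otherwise. Then (1) for $\Phi\in\mathscr{C}_c(X\times X)$, $$Kir_j\Phi(x^j_k)=\frac1{\mu(Q^j_k)}\sum_{\{i\neq k:d(x^j_i,x^j_k)<C\delta^j\}}\Phi(x^j_k,x^j_i)(\mu(Q^j_k)+\mu(Q^j_i))H^j_{ki};$$ (2) for $f$ continuous and bounded on $X$, $$\Delta_jf(x^j_k)=\sum_{\{i:d(x^j_i,x^j_k)<C\delta^j\}}(f(x^j_i)-f(x^j_k))\Big(1+\frac{\mu(Q^j_i)}{\mu(Q^j_k)}\Big)H^j_{ki}.$$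
   Context: $(X,d)$ has finite metric (Assouad) dimension: there is $N$ such that no ball of radius $r$ contains more than $N$ points of any $r/2$-disperse set (a set $D$ is $\varepsilon$-disperse if $d(x,y)\ge\varepsilon$ for distinct $x,y\in D$). A dyadic family is a countable family $\mathcal{D}=\bigcup_{j\in\mathbb{Z}}\mathcal{D}^j$ of Borel sets for which there are $0<\delta<1$, $0<a<b$, $M\in\mathbb{N}$ and points $\{x^j_k\}$ such that: each $\mathcal{D}^j=\{Q^j_k\}$ is a disjoint partition of $X$; $B_d(x^j_k,a\delta^j)\subseteq Q^j_k\subseteq B_d(x^j_k,b\delta^j)$; each $Q^j_k$ is the disjoint union of at most $M$ sets of $\mathcal{D}^{j+1}$. $\delta_p$ is the unit point mass. With $\mathscr{S}_1=\mathscr{C}_c(X)$, $\mathscr{S}_2=\mathscr{C}_c(X\times X)$, $Kir_j\Phi$ is a function on $\{x^j_k\}$ with $\int\varphi\,Kir_j\Phi\,dT_j=\iint\varphi(x)\Phi(x,y)\,dS_j(x,y)$ for all $\varphi\in\mathscr{S}_1$, and $\Delta_jf=Kir_j(f(y)-f(x))$ with the same identity. *)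

(* Defs.v *)
From HB Require Import structures.
From mathcomp Require Import all_boot all_order all_algebra.
From mathcomp Require Import all_classical all_reals all_analysis.
Set Implicit Arguments. Unset Strict Implicit. Unset Printing Implicit Defensive.
Import Order.TTheory GRing.Theory Num.Theory.
Import numFieldTopology.Exports numFieldNormedType.Exports.
Local Open Scope classical_set_scope.
Local Open Scope ring_scope.

(* X carried as a (nonempty, i.e. pointed) [metricType R]: d = mdist.
   Pointedness is required by MathComp-Analysis' measurable types. *)
HB.structure Definition PointedMetric (R : numDomainType) :=
  {T of Metric R T & Pointed T}.
Notation pmetricType := PointedMetric.type.

Notation borel T := (@g_sigma_algebraType (T : pointedType) (@open T)).

Definition complete_space (T : uniformType) :=
  forall F : set_system T, ProperFilter F -> cauchy F -> exists x : T, F --> x.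

Definition disperse (R : realType) (X : metricType R) (eps : R) (D : set X) :=
  forall x y, D x -> D y -> x <> y -> eps <= mdist x y.

Definition finite_metric_dimension (R : realType) (X : metricType R) :=
  exists N : nat, forall (x : X) (r : R) (D : set X),
    D `<=` [set y | mdist x y < r] -> disperse (r / 2) D ->
    exists s : seq X, (size s <= N)%N /\ D `<=` [set` s].

(* Dyadic family: level j (an integer) is indexed by the countable index set K j
   (a set of naturals); Q j k is the cube, x j k its center. *)
Definition dyadic_family (R : realType) (X : pmetricType R)
  (K : int -> set nat) (Q : int -> nat -> set X) (x : int -> nat -> X)
  (delta a b : R) (M : nat) :=
  [/\ 0 < delta < 1, 0 < a, a < b &
  forall j : int,
  [/\ (forall k, K j k -> measurable (Q j k : set (borel X))),
      (forall k k', K j k -> K j k' -> k <> k' -> Q j k `&` Q j k' = set0),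
      (forall y, exists2 k, K j k & Q j k y),
      (forall k, K j k ->
         [set y | mdist (x j k) y < a * delta ^ j] `<=` Q j k /\
         Q j k `<=` [set y | mdist (x j k) y < b * delta ^ j]) &
      (forall k, K j k -> exists s : seq nat,
         [/\ (size s <= M)%N, (forall i, i \in s -> K (j + 1) i) &
             Q j k = \bigcup_(i in [set` s]) Q (j + 1) i])]].

Definition Cc (R : realType) (T : topologicalType) (f : T -> R) :=
  continuous f /\ exists C : set T, compact C /\ forall t, ~ C t -> f t = 0.

Definition Cb (R : realType) (T : topologicalType) (f : T -> R) :=
  continuous f /\ exists B : R, forall t, `|f t| <= B.

Definition wght (R : realType) (X : metricType R) (m : nat -> R) (x : nat -> X)
  (H : nat -> nat -> R) (Cdj : R) (k i : nat) : R :=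
  if (k != i) && (mdist (x k) (x i) < Cdj) then H k i * (m k + m i) else 0.

(* integral of psi against T_j = sum_k m k delta_{x k}  (finitely supported sum) *)
Definition int_T (R : realType) (X : metricType R) (Kj : set nat) (m : nat -> R)
  (x : nat -> X) (psi : nat -> R) : R :=
  \sum_(k \in Kj) m k * psi k.

(* integral of Psi against S_j = sum_{k,i} w k i delta_{(x k, x i)} *)
Definition int_S (R : realType) (Kj : set nat) (w : nat -> nat -> R)
  (Psi : nat -> nat -> R) : R :=
  \sum_(p \in Kj `*` Kj) w p.1 p.2 * Psi p.1 p.2.

(* g (a function on the centers x k, k in Kj) is Kir_j Phi:
   int phi g dT_j = iint phi(x) Phi(x,y) dS_j(x,y) for all phi in C_c(X). *)
Definition is_Kir (R : realType) (X : metricType R) (Kj : set nat) (m : nat -> R)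
  (x : nat -> X) (w : nat -> nat -> R) (Phi : X * X -> R) (g : nat -> R) :=
  forall phi : X -> R, Cc phi ->
    int_T Kj m x (fun k => phi (x k) * g k) =
    int_S Kj w (fun k i => phi (x k) * Phi (x k, x i)).

(* Main.v *)
Require Import Defs.
From HB Require Import structures.
From mathcomp Require Import all_boot all_order all_algebra.
From mathcomp Require Import all_classical all_reals all_analysis.
From mathcomp Require Import ring lra.
From mathcomp Require finmap.
Import Order.TTheory GRing.Theory Num.Theory.
Import numFieldTopology.Exports numFieldNormedType.Exports.
Local Open Scope classical_set_scope.
Local Open Scope ring_scope.

Lemma cover_half (R : realType) (X : metricType R) : finite_metric_dimension X ->
  forall (c : X) (r : R), 0 < r -> exists s : seq X,
  forall y, mdist c y < r -> exists2 e, e \in s & mdist e y < r / 2.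
Proof.
move=> [N HN] c r r0.
pose good (E : seq X) := [/\ uniq E, (forall e, e \in E -> mdist c e < r) &
   (forall e e', e \in E -> e' \in E -> e <> e' -> r/2 <= mdist e e')].
have bnd E : good E -> (size E <= N)%N.
  case=> uE inEr sepE.
  have [s [ss sub]] := HN c r [set` E] (fun e eE => inEr e eE)
     (fun e e' eE e'E ne => sepE e e' eE e'E ne).
  apply: leq_trans ss; apply: uniq_leq_size uE _ => e eE; exact: sub e eE.
pose P := fun n => `[< exists E, good E /\ size E = n >].
have P0 : exists n, P n.
  by exists 0%N; apply/asboolP; exists [::]; split => //; split.
have PN : forall n, P n -> (n <= N)%N by move=> n /asboolP [E [gE <-]]; exact: bnd.
case: (ex_maxnP P0 PN) => n /asboolP [E [[uE inEr sepE] sE]] maxn.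
exists E => y cy.
apply: contrapT => H.
have far : forall e, e \in E -> r/2 <= mdist e y.
  move=> e eE; rewrite leNgt; apply/negP => lt; apply: H; exists e => //.
have yE : y \notin E.
  apply/negP => yE; have := far _ yE; rewrite mdistxx.
  by rewrite leNgt divr_gt0.
have : P (size (y :: E)).
  apply/asboolP; exists (y :: E); split => //; split.
  - by rewrite /= yE uE.
  - move=> e; rewrite inE => /orP [/eqP -> // | ]; exact: inEr.
  - move=> e e'; rewrite !inE => /orP [/eqP -> | eE] /orP [/eqP -> | e'E] ne //.
    + by rewrite metric_sym; apply: far.
    + exact: far.
    + exact: sepE.
by move/maxn; rewrite /= sE ltnn.
Qed.

Lemma cover_n (R : realType) (X : metricType R) : finite_metric_dimension X ->
  forall (n : nat) (c : X) (r : R), 0 < r -> exists s : seq X,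
  forall y, mdist c y < r -> exists2 e, e \in s & mdist e y < r / 2 ^+ n.
Proof.
move=> fmd n c r r0; elim: n => [|n [s Hs]].
  by exists [:: c] => y cy; exists c; rewrite ?inE ?expr0 ?divr1.
have rn0 : 0 < r / 2 ^+ n by rewrite divr_gt0 // exprn_gt0.
have [f Hf] := choice (fun e => @cover_half R X fmd e _ rn0).
exists (flatten (map f s)) => y /Hs [e es ey].
have [e' e'f e'y] := Hf e y ey.
exists e'; first by apply/flatten_mapP; exists e.
by rewrite exprSr invfM mulrA.
Qed.

Lemma fin_cover (R : realType) (X : metricType R) (I : Type) (P : set I)
  (f : I -> X) (s : seq X) (t : R) :
  (forall i, P i -> exists2 e, e \in s & mdist e (f i) < t) ->
  (forall i i', P i -> P i' -> mdist (f i) (f i') < 2 * t -> i = i') ->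
  finite_set P.
Proof.
move=> cov sep.
apply: (@sub_finite_set _ _ (\bigcup_(e in [set` s]) [set i | P i /\ mdist e (f i) < t])).
  by move=> i Pi; have [e es et] := cov i Pi; exists e.
apply: bigcup_finite; first exact: finite_seq.
move=> e _; case: (pselect (exists i, P i /\ mdist e (f i) < t)).
  move=> [i0 [Pi0 ei0]]; apply: (@sub_finite_set _ _ [set i0]); last exact: finite_set1.
  move=> i [Pi ei] /=; apply: sep => //.
  rewrite mulr2n mulrDl mul1r.
  apply: le_lt_trans (metric_triangle _ e _) _.
  by rewrite metric_sym ltrD.
move=> H; apply: (@sub_finite_set _ _ set0); last exact: finite_set0.
by move=> i Hi; apply: H; exists i.
Qed.

Lemma fin_ball (R : realType) (X : metricType R) : finite_metric_dimension X ->
  forall (I : Type) (P : set I) (f : I -> X) (c : X) (r rho : R), 0 < r -> 0 < rho ->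
  (forall i, P i -> mdist c (f i) < r) ->
  (forall i i', P i -> P i' -> mdist (f i) (f i') < rho -> i = i') ->
  finite_set P.
Proof.
move=> fmd I P f c r rho r0 rho0 inb sep.
pose n := Num.bound (2 * r / rho).
have hn : 2 * r / rho < 2 ^+ n by apply: upper_nthrootP.
have [s Hs] := @cover_n R X fmd n c r r0.
apply: (@fin_cover _ _ _ P f s (rho / 2)).
  move=> i Pi; have [e es ei] := Hs _ (inb i Pi); exists e => //.
  apply: lt_le_trans ei _.
  have p0 : 0 < (2:R) ^+ n by rewrite exprn_gt0.
  move: hn; set p := (2:R) ^+ n => hn.
  rewrite ler_pdivrMr //.
  move: hn; rewrite ltr_pdivrMr // => hn.
  lra.
by move=> i i' Pi Pi'; rewrite mulrC divfK //; apply: sep.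
Qed.

Lemma open_mball (R : realType) (X : metricType R) (c : X) (r : R) :
  open [set y | mdist c y < r].
Proof.
rewrite openE => y /= cy; rewrite /interior.
have r0 : 0 < r - mdist c y by rewrite subr_gt0.
have hb := nbhsx_ballx y _ r0.
apply: filterS hb => z; rewrite ballEmdist /= => yz.
apply: le_lt_trans (metric_triangle _ y _) _.
by rewrite -ltrBrDl.
Qed.

Lemma closure_mball (R : realType) (X : metricType R) (c : X) (r : R) : 0 < r ->
  closure [set y | mdist c y < r] `<=` [set y | mdist c y < 2 * r].
Proof.
move=> r0 y cly.
have hb := nbhsx_ballx y _ r0.
have := cly _ hb.
case=> z; case=> cz yz.
move: yz; rewrite ballEmdist /= => yz; move: cz => /= cz.
apply: le_lt_trans (metric_triangle _ z _) _.
by rewrite metric_sym in yz; lra.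
Qed.

Lemma cball_compact (R : realType) (X : metricType R) : finite_metric_dimension X ->
  complete_space X -> forall (c : X) (rho : R), 0 < rho ->
  compact (closure [set y | mdist c y < rho]).
Proof.
move=> fmd cpl c rho rho0; rewrite compact_ultra => F UF FA.
have PF : ProperFilter F by apply: ultra_proper.
have Fb : F [set y | mdist c y < 2 * rho] by apply: filterS FA; exact: closure_mball.
have cF : cauchy F.
  apply: cauchy_exP => e e0.
  pose n := Num.bound (2 * rho / e).
  have hn : 2 * rho / e < 2 ^+ n by apply: upper_nthrootP.
  have r2 : 0 < 2 * rho by rewrite mulr_gt0.
  have [s Hs] := @cover_n R X fmd n c _ r2.
  have Fs : F [set z | exists2 y, y \in s & mdist y z < e].
    apply: filterS Fb => z /Hs [y ys yz]; exists y => //; apply: lt_le_trans yz _.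
    have p0 : 0 < (2:R) ^+ n by rewrite exprn_gt0.
    move: hn; set p := (2:R) ^+ n => hn.
    rewrite ler_pdivrMr //.
    move: hn; rewrite ltr_pdivrMr // => hn.
    lra.
  clear Hs; elim: s Fs => [|y s IH] Fs.
    have : F set0 by apply: filterS Fs => z [y].
    by move/filter_not_empty.
  case: (in_ultra_setVsetC (ball y e) UF) => Fy; first by exists y.
  apply: IH; apply: filterS (filterI Fs Fy) => z [[y' + yz] nyz].
  rewrite inE => /orP [/eqP eq| y's]; last by exists y'.
  by exfalso; apply: nyz; rewrite ballEmdist -eq.
have [p Fp] := cpl F PF cF.
exists p; split => //.
have h := @closed_cvg _ _ F PF id (closure [set y | mdist c y < rho]) (@closed_closure _ [set y | mdist c y < rho]).
exact: h.
Qed.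

Lemma bump_Cc (R : realType) (X : metricType R) : finite_metric_dimension X ->
  complete_space X -> forall (c : X) (rho : R), 0 < rho ->
  Cc (fun y => Num.max 0 (rho - mdist c y)).
Proof.
move=> fmd cpl c rho rho0; split.
  move=> y; apply/cvgrPdist_lt => e e0.
  apply: filterS (nbhsx_ballx y _ e0) => t; rewrite ballEmdist /= => yt.
  have t1 := metric_triangle c y t.
  have t2 := metric_triangle c t y.
  rewrite (metric_sym t y) in t2.
  rewrite ltr_norml; case: (leP 0 (rho - mdist c y)) => h1;
    case: (leP 0 (rho - mdist c t)) => h2; apply/andP; split; lra.
exists (closure [set y | mdist c y < rho]); split; first exact: cball_compact.
move=> t nt; have : ~ (mdist c t < rho) by move=> h; apply: nt; exact: subset_closure.
move/negP; rewrite -leNgt => h.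
by apply/max_idPl; rewrite subr_le0.
Qed.

Theorem proposition3p3 (R : realType) (X : pmetricType R)
  (K : int -> set nat) (Q : int -> nat -> set X) (x : int -> nat -> X)
  (delta a b : R) (M : nat)
  (mu : {measure set (borel X) -> \bar R})
  (j : int) (C : R) (H : nat -> nat -> R) :
  complete_space X ->
  finite_metric_dimension X ->
  dyadic_family K Q x delta a b M ->
  (forall (y : X) (r : R), 0 < r ->
     (0 < mu [set z | (mdist y z < r)%R] < +oo)%E) ->
  0 < C ->
  (forall k i, K j k -> K j i -> H k i = H i k) ->
  (forall k i, K j k -> K j i -> 0 < H k i) ->
  let m := fun k => fine (mu (Q j k)) in
  let w := wght m (x j) H (C * delta ^ j) in
  (forall Phi : X * X -> R, Cc Phi -> forall g : nat -> R,
     is_Kir (K j) m (x j) w Phi g <->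
     (forall k, K j k -> g k =
        (m k)^-1 *
        \sum_(i \in [set i | K j i /\ i <> k /\ mdist (x j i) (x j k) < C * delta ^ j])
           Phi (x j k, x j i) * (m k + m i) * H k i)) /\
  (forall f : X -> R, Cb f -> forall g : nat -> R,
     is_Kir (K j) m (x j) w (fun p => f p.2 - f p.1) g <->
     (forall k, K j k -> g k =
        \sum_(i \in [set i | K j i /\ mdist (x j i) (x j k) < C * delta ^ j])
           (f (x j i) - f (x j k)) * (1 + m i / m k) * H k i)).
Proof.
move=> cpl fmd [hd ha hab hfam] hmu C0 Hsym Hpos m w.
have [Kmeas Kdisj Kcov Kball Ksub] := hfam j.
have dj0 : 0 < delta ^ j by apply: exprz_gt0; case/andP: hd.
set dj := delta ^ j in dj0 Kball *.
have r0 : 0 < a * dj by rewrite mulr_gt0.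
have sep : forall k k', K j k -> K j k' -> mdist (x j k) (x j k') < a * dj -> k = k'.
  move=> k k' Kk Kk' d; apply: contrapT => ne.
  have := Kdisj k k' Kk Kk' ne.
  have h1 : Q j k (x j k') by apply: (Kball k Kk).1.
  have h2 : Q j k' (x j k') by apply: (Kball k' Kk').1; rewrite /= mdistxx.
  have h : (Q j k `&` Q j k') (x j k') by split.
  by move=> e; rewrite e in h.
have mball : forall y r, measurable ([set z | mdist y z < r] : set (borel X)).
  by move=> y r; apply: sub_gen_smallest; exact: open_mball.
have mpos : forall k, K j k -> 0 < m k.
  move=> k Kk; rewrite /m; apply: fine_gt0; apply/andP; split.
    case/andP: (hmu (x j k) _ r0) => h1 _; apply: lt_le_trans h1 _.
    apply: le_measure; rewrite ?inE //; [exact: Kmeas | exact: (Kball k Kk).1].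
  have b0 : 0 < b * dj by rewrite mulr_gt0 // (lt_trans ha hab).
  case/andP: (hmu (x j k) _ b0) => _ h2; apply: le_lt_trans h2.
  apply: le_measure; rewrite ?inE //; [exact: Kmeas | exact: (Kball k Kk).2].
have mne : forall k, K j k -> m k != 0 by move=> k /mpos h; rewrite gt_eqF.
pose Nk k := [set i | K j i /\ mdist (x j i) (x j k) < C * dj].
pose Ak k := [set i | K j i /\ i <> k /\ mdist (x j i) (x j k) < C * dj].
have finN : forall k, finite_set (Nk k).
  move=> k; have Cd : 0 < C * dj by rewrite mulr_gt0.
  apply: (@fin_ball R X fmd nat (Nk k) (x j) (x j k) _ _ Cd r0).
    by move=> i [_ h]; rewrite metric_sym.
  by move=> i i' [Ki _] [Ki' _]; apply: sep.
have finP : forall phi : X -> R, Cc phi -> finite_set [set k | K j k /\ phi (x j k) != 0].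
  move=> phi [_ [S [cS Sz]]].
  have t0 : 0 < a * dj / 2 by rewrite divr_gt0.
  move: cS; rewrite compact_cover => cS.
  have [D' D'S cov] : finite_subset_cover S (fun y => [set z | mdist y z < a * dj / 2]) S.
    apply: cS; first by move=> y _; exact: open_mball.
    by move=> z Sz0; exists z => //=; rewrite mdistxx.
  apply: (@fin_cover R X nat _ (x j) (finmap.enum_fset D') (a * dj / 2)).
    move=> k [Kk pk].
    have Sk : S (x j k) by apply: contrapT => nS; move: pk; rewrite Sz // eqxx.
    by have [e eD ek] := cov _ Sk; exists e.
  move=> k k' [Kk _] [Kk' _]; rewrite mulrC divfK //; exact: sep.
have wE : forall k i, w k i = if (k != i) && (mdist (x j k) (x j i) < C * dj)
    then H k i * (m k + m i) else 0 by [].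
have AN : forall k, Ak k `<=` Nk k by move=> k i [Ki [_ h]].
have NK : forall k, Nk k `<=` K j by move=> k i [].
have inner : forall (Phi : X * X -> R) k (Q' : set nat) (c : R), K j k ->
    Ak k `<=` Q' -> Q' `<=` K j ->
    \sum_(i \in Q') w k i * (c * Phi (x j k, x j i)) =
    c * \sum_(i \in Ak k) Phi (x j k, x j i) * (m k + m i) * H k i.
  move=> Phi k Q' c Kk AQ QK.
  rewrite -(fsbig_widen (Ak k) Q') //; last first.
    move=> i [Qi nAi]; rewrite /preimage /= wE.
    case: ifP => [/andP [ne lt]|]; last by rewrite mul0r.
    exfalso; apply: nAi; split; first exact: QK.
    split; last by rewrite metric_sym.
    by move=> e; move: ne; rewrite e eqxx.
  rewrite mulr_fsumr; apply: eq_fsbigr => i /set_mem [Ki [ne lt]].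
  rewrite wE ifT; first by ring.
  apply/andP; split; last by rewrite metric_sym.
  by apply/eqP => e; apply: ne; rewrite e.
have core : forall (Phi : X * X -> R) (g : nat -> R),
    is_Kir (K j) m (x j) w Phi g <->
    (forall k, K j k -> g k = (m k)^-1 *
        \sum_(i \in Ak k) Phi (x j k, x j i) * (m k + m i) * H k i).
  move=> Phi g; split.
    move=> hK k Kk.
    pose phi := fun y => Num.max 0 (a * dj - mdist (x j k) y).
    have cphi : Cc phi by apply: bump_Cc.
    have phik : phi (x j k) = a * dj by rewrite /phi mdistxx subr0; apply/max_idPr/ltW.
    have phii : forall i, K j i -> i <> k -> phi (x j i) = 0.
      move=> i Ki ne; rewrite /phi; apply/max_idPl; rewrite subr_le0 leNgt.
      by apply/negP => lt; apply: ne; apply: esym; apply: sep.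
    have := hK phi cphi; rewrite /int_T /int_S.
    rewrite -(fsbig_widen [set k] (K j)); last 2 first.
    - by move=> ? ->.
    - move=> i [Ki ni]; rewrite /preimage /= phii ?mul0r ?mulr0 //.
    rewrite fsbig_set1.
    rewrite -(fsbig_widen ([set k] `*` Nk k) (K j `*` K j)); last 2 first.
    - by move=> [p1 p2] [/= -> [Kp2 _]]; split.
    - move=> [p1 p2] [[/= Kp1 Kp2] nP]; rewrite /preimage /=.
      have [e1|ne1] := eqVneq p1 k; last by rewrite phii ?mul0r ?mulr0 //; apply/eqP.
      subst p1; rewrite wE; case: ifP => [/andP [_ lt]|]; last by rewrite mul0r.
      by exfalso; apply: nP; split => //; split => //=; rewrite metric_sym.
    rewrite -(pair_fsbig _ (fun p1 p2 => w p1 p2 * (phi (x j p1) * Phi (x j p1, x j p2))));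
      [|exact: finite_set1|exact: finN].
    rewrite fsbig_set1 (inner Phi k (Nk k) _ Kk (AN k) (NK k)).
    rewrite phik => e.
    have r0ne : a * dj != 0 by rewrite gt_eqF.
    have mkne := mne k Kk.
    apply: (mulfI (mulf_neq0 mkne r0ne)); rewrite -mulrA e.
    by field; rewrite ?mkne ?r0ne.
  move=> hg phi cphi; rewrite /int_T /int_S.
  pose P := [set k | K j k /\ phi (x j k) != 0].
  have PK : P `<=` K j by move=> k [].
  have phi0 : forall k, K j k -> ~ P k -> phi (x j k) = 0.
    by move=> k Kk nP; apply/eqP; apply: contrapT => h; apply: nP; split => //; apply/negP.
  rewrite -(fsbig_widen P (K j)) //; last first.
    by move=> k [Kk nP]; rewrite /preimage /= phi0 ?mul0r ?mulr0.
  pose Q' := \bigcup_(k in P) Nk k.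
  have finQ : finite_set Q' by apply: bigcup_finite; [exact: finP | move=> k _; exact: finN].
  have QK : Q' `<=` K j by move=> i [k _ /NK].
  rewrite -(fsbig_widen (P `*` Q') (K j `*` K j)); last 2 first.
  - by move=> [p1 p2] [/PK ? /QK ?]; split.
  - move=> [p1 p2] [[/= Kp1 Kp2] nP]; rewrite /preimage /=.
    case: (pselect (P p1)) => Pp1; last by rewrite phi0 ?mul0r ?mulr0.
    rewrite wE; case: ifP => [/andP [_ lt]|]; last by rewrite mul0r.
    exfalso; apply: nP; split => //=; exists p1 => //; split => //.
    by rewrite metric_sym.
  rewrite -(pair_fsbig _ (fun p1 p2 => w p1 p2 * (phi (x j p1) * Phi (x j p1, x j p2)))) //;
    last exact: finP.
  apply: eq_fsbigr => k /set_mem [Kk pk].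
  rewrite inner //; last by move=> i /AN Ni; exists k.
  by rewrite hg //; have := mne k Kk => mkne; field; rewrite ?mkne.
split; first by move=> Phi _ g; exact: core.
move=> f _ g; rewrite core; split => h k Kk; rewrite h //.
  - have mkne := mne k Kk.
    rewrite mulr_fsumr /= (fsbig_widen (Ak k) (Nk k)) //; last first.
      move=> i [[Ki lt] nA]; rewrite /preimage /=.
      have -> : i = k by apply: contrapT => ne; apply: nA.
      by rewrite subrr !mul0r mulr0.
    by apply: eq_fsbigr => i _; field; rewrite ?mkne.
  - have mkne := mne k Kk.
    rewrite mulr_fsumr /= (fsbig_widen (Ak k) (Nk k)) //; last first.
      move=> i [[Ki lt] nA]; rewrite /preimage /=.
      have -> : i = k by apply: contrapT => ne; apply: nA.
      by rewrite subrr !mul0r mulr0.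
    by apply: eq_fsbigr => i _; field; rewrite ?mkne.
Qed.
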